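(* For closed terms, the axiom system $\mathbf{BTC}$ (defined in the context) is complete with respect to the standard model: for all closed $\mathbf{BTC}$ tuplix terms $s$ and $t$, if $[\![s]\!]=[\![t]\!]$ then $\mathbf{BTC}\vdash s=t$.
   Context: Data: a meadow is a commutative ring with unit with a total unary operation $(\cdot)^{-1}$ satisfying $(u^{-1})^{-1}=u$ and $u\cdot(u\cdot u^{-1})=u$; a non-trivial cancellation meadow additionally satisfies $0\neq 1$ and the cancellation law ($u\neq 0$ and $uv=uw$ imply $v=w$). Fix such a structure $\mathcal{D}$. Data terms are built from data variables, constants $0,1$, binary $+,\cdot$ and unary $-$, $(\cdot)^{-1}$; write $p/q$ for $p\cdot q^{-1}$ and $p-q$ for $p+(-q)$. Fix a nonempty set $A$ of attributes. $\mathbf{BTC}$ tuplix terms are built from tuplix variables, constants $\epsilon$ and $\delta$, entries $a(p)$ ($a\in A$, $p$ a data term), zero tests $\gamma(p)$, and the binary operators $\oplus$ (conjunctive composition) and $+$ (alternative composition). $\mathbf{BTC}$ is the two-sorted equational proof system with axioms (T1) $x\oplus y=y\oplus x$; (T2) $(x\oplus y)\oplus z=x\oplus(y\oplus z)$; (T3) $x\oplus\epsilon=x$; (T4) $x\oplus\delta=\delta$; (T5) $a(u)\oplus a(v)=a(u+v)$; (T6) $\gamma(u)=\gamma(u/u)$; (T7) $\gamma(0)=\epsilon$; (T8) $\gamma(1)=\delta$; (T9) $\gamma(u)\oplus\gamma(v)=\gamma(u/u+v/v)$; (T10) $\gamma(u-v)\oplus a(u)=\gamma(u-v)\oplus a(v)$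 (for all $a\in A$); (C1) $x+y=y+x$; (C2) $(x+y)+z=x+(y+z)$; (C3) $x+x=x$; (C4) $x+\delta=x$; (C5) $x\oplus(y+z)=(x\oplus y)+(x\oplus z)$; (C6) $\gamma(u)+\gamma(v)=\gamma(uv)$; together with the rule (DE): for all data terms $p,q$, if $\mathcal{D}\models p=q$ then $\gamma(p)=\gamma(q)$ is derivable. Standard model: let $F$ be the set of partial functions $A\rightharpoonup\mathcal{D}$; the domain is $2^F$. For $a\in A$, $d\in\mathcal{D}$, $f_{a,d}$ is defined only at $a$ with value $d$; $f_\epsilon$ is nowhere defined. For $f,g\in F$, $f\oplus g$ is defined at $a$ iff $f$ or $g$ is, with value $f(a)$ if only $f$ is defined there, $g(a)$ if only $g$ is, and $f(a)+g(a)$ if both are. A term is closed if it contains no tuplix and no data variables; closed data terms $p$ denote elements $[\![p]\!]\in\mathcal{D}$. Closed tuplix terms are interpreted by $[\![\delta]\!]=\emptyset$, $[\![\epsilon]\!]=\{f_\epsilon\}$, $[\![a(p)]\!]=\{f_{a,[\![p]\!]}\}$, $[\![\gamma(p)]\!]=\{f_\epsilon\}$ if $[\![p]\!]=0$ and $=\emptyset$ otherwise, $[\![s\oplus t]\!]=\{f\oplus g\mid f\in[\![s]\!],g\in[\![t]\!]\}$, $[\![s+t]\!]=[\![s]\!]\cup[\![t]\!]$. *)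

(* Defs.v *)
Set Implicit Arguments.

Record CancMeadow : Type := {
  mcar :> Type;
  mzero : mcar; mone : mcar;
  madd : mcar -> mcar -> mcar;
  mmul : mcar -> mcar -> mcar;
  mopp : mcar -> mcar;
  minv : mcar -> mcar;
  madd_assoc : forall x y z, madd (madd x y) z = madd x (madd y z);
  madd_comm : forall x y, madd x y = madd y x;
  madd_0 : forall x, madd x mzero = x;
  madd_opp : forall x, madd x (mopp x) = mzero;
  mmul_assoc : forall x y z, mmul (mmul x y) z = mmul x (mmul y z);
  mmul_comm : forall x y, mmul x y = mmul y x;
  mmul_1 : forall x, mmul x mone = x;
  mmul_distr : forall x y z, mmul x (madd y z) = madd (mmul x y) (mmul x z);
  minv_inv : forall u, minv (minv u) = u;
  mmul_inv_ax : forall u, mmul u (mmul u (minv u)) = u;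
  mnontriv : mzero <> mone;
  mcancel : forall u v w, u <> mzero -> mmul u v = mmul u w -> v = w
}.

Inductive dterm : Type :=
| DVar : nat -> dterm
| DZero : dterm
| DOne : dterm
| DAdd : dterm -> dterm -> dterm
| DMul : dterm -> dterm -> dterm
| DOpp : dterm -> dterm
| DInv : dterm -> dterm.

Definition DDiv (p q : dterm) : dterm := DMul p (DInv q).
Definition DSub (p q : dterm) : dterm := DAdd p (DOpp q).

Fixpoint deval (M : CancMeadow) (rho : nat -> M) (p : dterm) : M :=
  match p with
  | DVar n => rho n
  | DZero => mzero M
  | DOne => mone M
  | DAdd p q => madd M (@deval M rho p) (@deval M rho q)
  | DMul p q => mmul M (@deval M rho p) (@deval M rho q)
  | DOpp p => mopp M (@deval M rho p)
  | DInv p => minv M (@deval M rho p)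
  end.
Arguments deval {M} rho p.

Definition dvalid (M : CancMeadow) (p q : dterm) : Prop :=
  forall rho : nat -> M, deval rho p = deval rho q.

Fixpoint dclosed (p : dterm) : Prop :=
  match p with
  | DVar _ => False
  | DZero | DOne => True
  | DAdd p q | DMul p q => dclosed p /\ dclosed q
  | DOpp p | DInv p => dclosed p
  end.

Inductive tterm (A : Type) : Type :=
| TVar : nat -> tterm A
| TEps : tterm A
| TDelta : tterm A
| TEntry : A -> dterm -> tterm A
| TGamma : dterm -> tterm A
| TConj : tterm A -> tterm A -> tterm A
| TAlt : tterm A -> tterm A -> tterm A.

Arguments TVar {A}. Arguments TEps {A}. Arguments TDelta {A}.
Arguments TGamma {A}.

Fixpoint tclosed (A : Type) (t : tterm A) : Prop :=
  match t with
  | TVar _ => False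
  | TEps | TDelta => True
  | TEntry _ p => dclosed p
  | TGamma p => dclosed p
  | TConj s t | TAlt s t => tclosed s /\ tclosed t
  end.

(** Axioms are given as schemes: x,y,z range over all tuplix terms and
    u,v over all data terms (this is equivalent to equational logic with
    substitution instances). *)
Inductive btc (M : CancMeadow) (A : Type) : tterm A -> tterm A -> Prop :=
| btc_refl : forall x, btc M x x
| btc_sym : forall x y, btc M x y -> btc M y x
| btc_trans : forall x y z, btc M x y -> btc M y z -> btc M x z
| btc_conj_cong : forall x x' y y', btc M x x' -> btc M y y' ->
    btc M (TConj x y) (TConj x' y')
| btc_alt_cong : forall x x' y y', btc M x x' -> btc M y y' ->
    btc M (TAlt x y) (TAlt x' y')
| btc_T1 : forall x y, btc M (TConj x y) (TConj y x)
| btc_T2 : forall x y z, btc M (TConj (TConj x y) z) (TConj x (TConj y z))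
| btc_T3 : forall x, btc M (TConj x TEps) x
| btc_T4 : forall x, btc M (TConj x TDelta) TDelta
| btc_T5 : forall a u v,
    btc M (TConj (TEntry a u) (TEntry a v)) (TEntry a (DAdd u v))
| btc_T6 : forall u, btc M (TGamma u) (TGamma (DDiv u u))
| btc_T7 : btc M (TGamma DZero) TEps
| btc_T8 : btc M (TGamma DOne) TDelta
| btc_T9 : forall u v,
    btc M (TConj (TGamma u) (TGamma v)) (TGamma (DAdd (DDiv u u) (DDiv v v)))
| btc_T10 : forall u v a,
    btc M (TConj (TGamma (DSub u v)) (TEntry a u))
          (TConj (TGamma (DSub u v)) (TEntry a v))
| btc_C1 : forall x y, btc M (TAlt x y) (TAlt y x)
| btc_C2 : forall x y z, btc M (TAlt (TAlt x y) z) (TAlt x (TAlt y z))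
| btc_C3 : forall x, btc M (TAlt x x) x
| btc_C4 : forall x, btc M (TAlt x TDelta) x
| btc_C5 : forall x y z,
    btc M (TConj x (TAlt y z)) (TAlt (TConj x y) (TConj x z))
| btc_C6 : forall u v, btc M (TAlt (TGamma u) (TGamma v)) (TGamma (DMul u v))
| btc_DE : forall p q, dvalid M p q -> btc M (TGamma p) (TGamma q).

(** F = partial functions A -> D, represented as A -> option D;
    the domain 2^F is represented by predicates on F. All sets below are
    closed under pointwise equality of partial functions. *)
Definition pfun (M : CancMeadow) (A : Type) := A -> option M.

Definition oplus_val (M : CancMeadow) (o1 o2 : option M) : option M :=
  match o1, o2 with
  | None, None => None
  | Some x, None => Some x
  | None, Some y => Some y
  | Some x, Some y => Some (madd M x y)
  end.

(** Value of a closed data term (the valuation is irrelevant for closed terms). *)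
Definition dden (M : CancMeadow) (p : dterm) : M := deval (fun _ => mzero M) p.

Fixpoint tden (M : CancMeadow) (A : Type) (t : tterm A) : pfun M A -> Prop :=
  match t with
  | TVar _ => fun _ => False (* not used: only closed terms are interpreted *)
  | TDelta => fun _ => False
  | TEps => fun h => forall b, h b = None
  | TEntry a p => fun h =>
      h a = Some (dden M p) /\ forall b, b <> a -> h b = None
  | TGamma p => fun h => dden M p = mzero M /\ forall b, h b = None
  | TConj s t => fun h => exists f g, @tden M A s f /\ @tden M A t g /\
      forall b, h b = oplus_val M (f b) (g b)
  | TAlt s t => fun h => @tden M A s h \/ @tden M A t h
  end.
Arguments tden {M A} t h.

Definition sem_eq (M : CancMeadow) (A : Type) (s t : tterm A) : Prop :=
  forall h : pfun M A, tden s h <-> tden t h.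

(* Main.v *)
Require Import Defs.
From Stdlib Require Import List ClassicalEpsilon Lia.
Import ListNotations.

Definition dec (P : Prop) : {P} + {~ P} := excluded_middle_informative P.

Section Helpers.
Variable M : CancMeadow.
Variable A : Type.

Notation B := (btc M (A:=A)).

Fixpoint mono (m : list (A * dterm)) : tterm A :=
  match m with
  | [] => TEps
  | (a, p) :: m' => TConj (TEntry a p) (mono m')
  end.

Fixpoint sumL (L : list (list (A * dterm))) : tterm A :=
  match L with
  | [] => TDelta
  | m :: L' => TAlt (mono m) (sumL L')
  end.

Fixpoint nf (t : tterm A) : list (list (A * dterm)) :=
  match t with
  | TVar _ => []
  | TEps => [[]]
  | TDelta => []
  | TEntry a p => [[(a, p)]]
  | TGamma p => if dec (dden M p = mzero M) then [[]] else []
  | TAlt s t => nf s ++ nf t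
  | TConj s t => flat_map (fun m1 => map (fun m2 => m1 ++ m2) (nf t)) (nf s)
  end.

Lemma B_trans3 x y z w : B x y -> B y z -> B z w -> B x w.
Proof. intros; eapply btc_trans; [eassumption|]; eapply btc_trans; eassumption. Qed.

Lemma sumL_app L1 L2 : B (sumL (L1 ++ L2)) (TAlt (sumL L1) (sumL L2)).
Proof.
  induction L1 as [|m L1 IH]; simpl.
  - eapply btc_trans; [apply btc_sym, btc_C4|]. apply btc_C1.
  - eapply btc_trans; [apply btc_alt_cong; [apply btc_refl|exact IH]|].
    apply btc_sym, btc_C2.
Qed.

Lemma mono_app m1 m2 : B (mono (m1 ++ m2)) (TConj (mono m1) (mono m2)).
Proof.
  induction m1 as [|[a p] m1 IH]; simpl.
  - eapply btc_trans; [apply btc_sym, btc_T3|]. apply btc_T1.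
  - eapply btc_trans; [apply btc_conj_cong; [apply btc_refl|exact IH]|].
    apply btc_sym, btc_T2.
Qed.

Lemma conj_mono_sum m L :
  B (TConj (mono m) (sumL L)) (sumL (map (fun m2 => m ++ m2) L)).
Proof.
  induction L as [|m2 L IH]; simpl.
  - apply btc_T4.
  - eapply btc_trans; [apply btc_C5|]. apply btc_alt_cong; [|exact IH].
    apply btc_sym, mono_app.
Qed.

Lemma conj_sum_sum L1 L2 :
  B (TConj (sumL L1) (sumL L2))
    (sumL (flat_map (fun m1 => map (fun m2 => m1 ++ m2) L2) L1)).
Proof.
  induction L1 as [|m L1 IH]; simpl.
  - eapply btc_trans; [apply btc_T1|]. apply btc_T4.
  - eapply btc_trans; [apply btc_T1|].
    eapply btc_trans; [apply btc_C5|].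
    eapply btc_trans; [|apply btc_sym, sumL_app].
    apply btc_alt_cong.
    + eapply btc_trans; [apply btc_T1|]. apply conj_mono_sum.
    + eapply btc_trans; [apply btc_T1|]. exact IH.
Qed.

Lemma deval_closed p (rho1 rho2 : nat -> M) : dclosed p -> deval rho1 p = deval rho2 p.
Proof.
  induction p; simpl; intuition congruence.
Qed.

Lemma mul_inv_one (x : M) : x <> mzero M -> mmul M x (minv M x) = mone M.
Proof.
  intro H. apply (mcancel M _ _ H). rewrite mmul_inv_ax, mmul_1. reflexivity.
Qed.

Lemma nf_btc t : tclosed t -> B t (sumL (nf t)).
Proof.
  induction t; simpl; intros Hc.
  - contradiction.
  - apply btc_sym, btc_C4.
  - apply btc_refl.
  - eapply btc_trans; [|apply btc_sym, btc_C4]. apply btc_sym, btc_T3.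
  - destruct (dec (dden M d = mzero M)) as [H|H]; simpl.
    + eapply B_trans3; [apply btc_DE| apply btc_T7| apply btc_sym, btc_C4].
      intro rho. simpl. rewrite <- H. apply deval_closed; auto.
    + eapply B_trans3; [apply btc_T6| apply btc_DE| apply btc_T8].
      intro rho. simpl. unfold DDiv; simpl.
      rewrite (deval_closed d rho (fun _ => mzero M)) by auto.
      apply mul_inv_one. exact H.
  - destruct Hc. eapply btc_trans; [apply btc_conj_cong; [apply IHt1|apply IHt2]; auto|].
    apply conj_sum_sum.
  - destruct Hc. eapply btc_trans; [apply btc_alt_cong; [apply IHt1|apply IHt2]; auto|].
    apply btc_sym, sumL_app.
Qed.


Definition ent (a c : A) (p : dterm) : option M :=
  if dec (a = c) then Some (dden M p) else None.

Fixpoint msem (m : list (A * dterm)) (c : A) : option M :=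
  match m with
  | [] => None
  | (a, p) :: m' => oplus_val M (ent a c p) (msem m' c)
  end.

Lemma oplus_assoc x y z :
  oplus_val M (oplus_val M x y) z = oplus_val M x (oplus_val M y z).
Proof. destruct x, y, z; simpl; auto. rewrite madd_assoc; auto. Qed.

Lemma oplus_comm x y : oplus_val M x y = oplus_val M y x.
Proof. destruct x, y; simpl; auto. rewrite madd_comm; auto. Qed.

Lemma oplus_None_r x : oplus_val M x None = x.
Proof. destruct x; auto. Qed.

Lemma msem_app m1 m2 c : msem (m1 ++ m2) c = oplus_val M (msem m1 c) (msem m2 c).
Proof.
  induction m1 as [|[a p] m1 IH]; simpl. { destruct (msem m2 c); reflexivity. }
  rewrite IH, oplus_assoc; auto.
Qed.

Lemma tden_mono m h : tden (mono m) h <-> forall c, h c = msem m c.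
Proof.
  revert h; induction m as [|[a p] m IH]; simpl.
  - intro h; tauto.
  - intro h; split.
    + intros (f & g & [Hfa Hfb] & Hg & Hh) c. rewrite Hh. pose proof (proj1 (IH g) Hg) as Hg'.
      rewrite Hg'. unfold ent. destruct (dec (a = c)).
      * subst; rewrite Hfa; auto.
      * rewrite Hfb; auto.
    + intros Hh. exists (fun c => ent a c p), (msem m). split; [split|split].
      * unfold ent; destruct (dec (a = a)); tauto.
      * intros b Hb; unfold ent; destruct (dec (a = b)); [congruence|auto].
      * apply IH; auto.
      * auto.
Qed.

Lemma tden_nf t h :
  tden t h <-> exists m, In m (nf t) /\ forall c, h c = msem m c.
Proof.
  revert h; induction t; intro h; simpl.
  - split; [tauto|]. intros (m & [] & _).
  - split; [intro H; exists []; simpl; auto|].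
    intros (m & [<-|[]] & H); auto.
  - split; [tauto|]. intros (m & [] & _).
  - split.
    + intros [H1 H2]. exists [(a, d)]; split; [left; auto|].
      intro c; simpl; rewrite oplus_None_r; unfold ent.
      destruct (dec (a = c)); [subst; auto|apply H2; auto].
    + intros (m & [<-|[]] & H). simpl in H. split.
      * rewrite H, oplus_None_r; unfold ent; destruct (dec (a = a)); tauto.
      * intros b Hb. rewrite H, oplus_None_r; unfold ent.
        destruct (dec (a = b)); [congruence|auto].
  - destruct (dec (dden M d = mzero M)) as [E|E]; simpl.
    + split; [intros [_ H]; exists []; simpl; auto|].
      intros (m & [<-|[]] & H); auto.
    + split; [intros [H _]; contradiction|]. intros (m & [] & _).
  - split.
    + intros (f & g & Hf & Hg & Hh).
      apply IHt1 in Hf as (m1 & I1 & H1). apply IHt2 in Hg as (m2 & I2 & H2).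
      exists (m1 ++ m2). split.
      * apply in_flat_map. exists m1; split; auto. apply in_map; auto.
      * intro c. rewrite msem_app, Hh, H1, H2; auto.
    + intros (m & Im & Hm). apply in_flat_map in Im as (m1 & I1 & Im).
      apply in_map_iff in Im as (m2 & <- & I2).
      exists (msem m1), (msem m2). split; [|split].
      * apply IHt1. exists m1; auto.
      * apply IHt2. exists m2; auto.
      * intro c; rewrite Hm, msem_app; auto.
  - rewrite IHt1, IHt2. split.
    + intros [(m & I & H)|(m & I & H)]; exists m; split; auto; apply in_or_app; auto.
    + intros (m & I & H). apply in_app_or in I as [I|I]; [left|right]; exists m; auto.
Qed.


Fixpoint splitA (a : A) (m : list (A * dterm)) : list dterm * list (A * dterm) :=
  match m with
  | [] => ([], [])
  | (b, p) :: m' =>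
      let (ps, r) := splitA a m' in
      if dec (b = a) then (p :: ps, r) else (ps, (b, p) :: r)
  end.

Lemma splitA_btc a m ps r : splitA a m = (ps, r) ->
  B (mono m) (TConj (mono (map (pair a) ps)) (mono r)).
Proof.
  revert ps r; induction m as [|[b p] m IH]; intros ps r E; simpl in E.
  - inversion E; subst; simpl. apply btc_sym, btc_T3.
  - destruct (splitA a m) as [ps' r'] eqn:E'.
    destruct (dec (b = a)); inversion E; subst; simpl.
    + eapply btc_trans; [apply btc_conj_cong; [apply btc_refl|apply IH; auto]|].
      apply btc_sym, btc_T2.
    + eapply btc_trans; [apply btc_conj_cong; [apply btc_refl|apply IH; auto]|].
      eapply btc_trans; [apply btc_sym, btc_T2|].
      eapply btc_trans; [apply btc_conj_cong; [apply btc_T1|apply btc_refl]|].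
      apply btc_T2.
Qed.

Lemma splitA_sem a m ps r : splitA a m = (ps, r) ->
  forall c, msem m c = oplus_val M (msem (map (pair a) ps) c) (msem r c).
Proof.
  revert ps r; induction m as [|[b p] m IH]; intros ps r E c; simpl in E.
  - inversion E; subst; simpl. reflexivity.
  - destruct (splitA a m) as [ps' r'] eqn:E'.
    destruct (dec (b = a)); inversion E; subst; simpl.
    + rewrite (IH _ _ eq_refl c), oplus_assoc; auto.
    + rewrite (IH _ _ eq_refl c). rewrite <- !oplus_assoc, (oplus_comm (ent b c p)).
      reflexivity.
Qed.

Lemma splitA_len a m ps r : splitA a m = (ps, r) -> length ps + length r = length m.
Proof.
  revert ps r; induction m as [|[b p] m IH]; intros ps r E; simpl in E.
  - inversion E; subst; auto.
  - destruct (splitA a m) as [ps' r'] eqn:E'.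
    specialize (IH _ _ eq_refl).
    destruct (dec (b = a)); inversion E; subst; simpl; rewrite <- IH; auto.
Qed.

Lemma splitA_in a m ps r : splitA a m = (ps, r) ->
  (forall p, In p ps -> In (a, p) m) /\ (forall e, In e r -> In e m /\ fst e <> a).
Proof.
  revert ps r; induction m as [|[b p] m IH]; intros ps r E; simpl in E.
  - inversion E; subst; simpl; tauto.
  - destruct (splitA a m) as [ps' r'] eqn:E'.
    destruct (IH _ _ eq_refl) as [H1 H2].
    destruct (dec (b = a)); inversion E; subst; simpl.
    + split; [intros q [<-|Hq]; auto|]. intros e He; destruct (H2 e He); auto.
    + split; [intros q Hq; auto|]. intros e [<-|He]; simpl; auto.
      destruct (H2 e He); auto.
Qed.

Lemma msem_notin r c : (forall e, In e r -> fst e <> c) -> msem r c = None.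
Proof.
  induction r as [|[b p] r IH]; intros H; simpl; auto.
  rewrite IH by (intros; apply H; simpl; auto). unfold ent.
  destruct (dec (b = c)); simpl; auto. exfalso; apply (H (b, p)); simpl; auto.
Qed.

Lemma msem_map_ne a ps c : a <> c -> msem (map (pair a) ps) c = None.
Proof.
  intros H; apply msem_notin. intros e He. apply in_map_iff in He as (q & <- & _). auto.
Qed.

Fixpoint dsum (p : dterm) (qs : list dterm) : dterm :=
  match qs with
  | [] => p
  | q :: qs' => DAdd p (dsum q qs')
  end.

Lemma msem_map_eq a p qs : msem (map (pair a) (p :: qs)) a = Some (dden M (dsum p qs)).
Proof.
  revert p; induction qs as [|q qs IH]; intro p.
  - simpl; unfold ent; destruct (dec (a = a)); [reflexivity|tauto].
  - change (oplus_val M (ent a a p) (msem (map (pair a) (q :: qs)) a)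
      = Some (dden M (dsum p (q :: qs)))).
    rewrite IH. unfold ent; destruct (dec (a = a)); [reflexivity|tauto].
Qed.

Lemma mono_map_btc a p qs : B (mono (map (pair a) (p :: qs))) (TEntry a (dsum p qs)).
Proof.
  revert p; induction qs as [|q qs IH]; intro p; simpl.
  - apply btc_T3.
  - eapply btc_trans; [apply btc_conj_cong; [apply btc_refl| apply (IH q)]|].
    apply btc_T5.
Qed.

Lemma dsum_closed p qs : dclosed p -> (forall q, In q qs -> dclosed q) -> dclosed (dsum p qs).
Proof.
  revert p; induction qs as [|q qs IH]; intros p Hp Hq; simpl; auto.
  split; auto. apply IH; auto; intros; apply Hq; simpl; auto.
Qed.

Lemma entry_eq a x y : dclosed x -> dclosed y -> dden M x = dden M y ->
  B (TEntry a x) (TEntry a y).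
Proof.
  intros Hx Hy E.
  assert (G : B (TGamma (DSub x y)) TEps).
  { eapply btc_trans; [apply btc_DE|apply btc_T7].
    intro rho; simpl. rewrite (deval_closed x rho (fun _ => mzero M)) by auto.
    rewrite (deval_closed y rho (fun _ => mzero M)) by auto.
    fold (dden M x); fold (dden M y). rewrite E. apply madd_opp. }
  eapply btc_trans; [apply btc_sym, btc_T3|].
  eapply btc_trans; [apply btc_T1|].
  eapply btc_trans; [apply btc_conj_cong; [apply btc_sym, G|apply btc_refl]|].
  eapply btc_trans; [apply btc_T10|].
  eapply btc_trans; [apply btc_conj_cong; [apply G|apply btc_refl]|].
  eapply btc_trans; [apply btc_T1|]. apply btc_T3.
Qed.

Definition mclosed (m : list (A * dterm)) := forall e, In e m -> dclosed (snd e).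

Lemma mono_complete n : forall m1 m2, length m1 <= n -> mclosed m1 -> mclosed m2 ->
  (forall c, msem m1 c = msem m2 c) -> B (mono m1) (mono m2).
Proof.
  induction n as [|n IHn]; intros m1 m2 Hl C1 C2 Hs.
  - destruct m1; [|simpl in Hl; inversion Hl].
    destruct m2 as [|[b q] m2]; [apply btc_refl|].
    exfalso. specialize (Hs b). simpl in Hs. unfold ent in Hs.
    destruct (dec (b = b)); [|tauto]. simpl in Hs. destruct (msem m2 b); discriminate.
  - destruct m1 as [|[a p] m1'].
    + destruct m2 as [|[b q] m2]; [apply btc_refl|].
      exfalso. specialize (Hs b). simpl in Hs. unfold ent in Hs.
      destruct (dec (b = b)); [|tauto]. simpl in Hs. destruct (msem m2 b); discriminate.
    + set (m1 := (a, p) :: m1') in *.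
      assert (Ha1 : msem m1 a <> None).
      { simpl. unfold ent. destruct (dec (a = a)); [|tauto]. simpl.
        destruct (msem m1' a); discriminate. }
      assert (Ha2 : msem m2 a <> None) by (rewrite <- Hs; auto).
      destruct (splitA a m1) as [ps1 r1] eqn:E1.
      destruct (splitA a m2) as [ps2 r2] eqn:E2.
      assert (Hr1 := proj2 (splitA_in _ _ _ _ E1)).
      assert (Hr2 := proj2 (splitA_in _ _ _ _ E2)).
      assert (Hp1 := proj1 (splitA_in _ _ _ _ E1)).
      assert (Hp2 := proj1 (splitA_in _ _ _ _ E2)).
      assert (Rn1 : msem r1 a = None)
        by (apply msem_notin; intros e He; apply Hr1; auto).
      assert (Rn2 : msem r2 a = None)
        by (apply msem_notin; intros e He; apply Hr2; auto).
      assert (S1 := splitA_sem _ _ _ _ E1). assert (S2 := splitA_sem _ _ _ _ E2).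
      destruct ps1 as [|p1 qs1].
      { exfalso; apply Ha1; rewrite S1, Rn1; reflexivity. }
      destruct ps2 as [|p2 qs2].
      { exfalso; apply Ha2; rewrite S2, Rn2; reflexivity. }
      eapply btc_trans; [apply (splitA_btc _ _ _ _ E1)|].
      eapply btc_trans; [|apply btc_sym, (splitA_btc _ _ _ _ E2)].
      apply btc_conj_cong.
      * eapply btc_trans; [apply mono_map_btc|].
        eapply btc_trans; [|apply btc_sym, mono_map_btc].
        apply entry_eq.
        -- apply dsum_closed; [apply (C1 (a, p1)), Hp1; simpl; auto|].
           intros q Hq; apply (C1 (a, q)), Hp1; simpl; auto.
        -- apply dsum_closed; [apply (C2 (a, p2)), Hp2; simpl; auto|].
           intros q Hq; apply (C2 (a, q)), Hp2; simpl; auto.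
        -- assert (X := Hs a). rewrite S1, S2, Rn1, Rn2, !msem_map_eq in X.
           simpl in X. congruence.
      * apply IHn.
        -- assert (L := splitA_len _ _ _ _ E1). unfold m1 in L, Hl. simpl in L, Hl.
           lia.
        -- intros e He; apply C1, Hr1; auto.
        -- intros e He; apply C2, Hr2; auto.
        -- intro c. destruct (dec (a = c)) as [<-|Hac]; [congruence|].
           assert (X := Hs c). rewrite S1, S2, !msem_map_ne in X by auto.
           destruct (msem r1 c), (msem r2 c); simpl in X; exact X.
Qed.


Lemma absorb1 x m L : In m L -> B x (mono m) -> B (TAlt x (sumL L)) (sumL L).
Proof.
  induction L as [|m0 L IH]; intros HI Hx; [destruct HI|]. simpl.
  destruct HI as [<-|HI].
  - eapply btc_trans; [apply btc_sym, btc_C2|].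
    apply btc_alt_cong; [|apply btc_refl].
    eapply btc_trans; [apply btc_alt_cong; [exact Hx|apply btc_refl]|]. apply btc_C3.
  - eapply btc_trans; [apply btc_sym, btc_C2|].
    eapply btc_trans; [apply btc_alt_cong; [apply btc_C1|apply btc_refl]|].
    eapply btc_trans; [apply btc_C2|].
    apply btc_alt_cong; [apply btc_refl|]. apply IH; auto.
Qed.

Lemma absorb L1 L2 :
  (forall m, In m L1 -> exists m', In m' L2 /\ B (mono m) (mono m')) ->
  B (TAlt (sumL L1) (sumL L2)) (sumL L2).
Proof.
  induction L1 as [|m L1 IH]; intros H; simpl.
  - eapply btc_trans; [apply btc_C1|]. apply btc_C4.
  - eapply btc_trans; [apply btc_C2|].
    eapply btc_trans; [apply btc_alt_cong; [apply btc_refl|apply IH; intros; apply H; simpl; auto]|].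
    destruct (H m) as (m' & I & Hm); [simpl; auto|].
    eapply absorb1; eauto.
Qed.

Lemma nf_closed t : tclosed t -> forall m, In m (nf t) -> mclosed m.
Proof.
  induction t; simpl; intros Hc m Hm; try contradiction.
  - destruct Hm as [<-|[]]; intros e [].
  - destruct Hm as [<-|[]]; intros e [<-|[]]; simpl; auto.
  - destruct (dec (dden M d = mzero M)) as [E|E]; simpl in Hm; [|contradiction].
    destruct Hm as [<-|[]]; intros e [].
  - destruct Hc. apply in_flat_map in Hm as (m1 & I1 & Im).
    apply in_map_iff in Im as (m2 & <- & I2).
    intros e He. apply in_app_or in He as [He|He]; [apply (IHt1 H m1)|apply (IHt2 H0 m2)]; auto.
  - destruct Hc. apply in_app_or in Hm as [Hm|Hm]; eauto.
Qed.

Lemma half s t : tclosed s -> tclosed t -> sem_eq M s t ->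
  forall m, In m (nf s) -> exists m', In m' (nf t) /\ B (mono m) (mono m').
Proof.
  intros Cs Ct Hst m Hm.
  assert (Hs : tden s (msem m)) by (apply tden_nf; exists m; auto).
  apply Hst, tden_nf in Hs as (m' & I & Hm').
  exists m'; split; auto.
  apply (mono_complete (length m)); auto.
  - apply (nf_closed s); auto.
  - apply (nf_closed t); auto.
Qed.

End Helpers.

Theorem theorem2 (M : CancMeadow) (A : Type) (HA : inhabited A)
  (s t : tterm A) :
  tclosed s -> tclosed t -> sem_eq M s t -> btc M s t.
Proof.
  intros Cs Ct H.
  eapply btc_trans; [apply nf_btc; auto|].
  eapply btc_trans; [|apply btc_sym, nf_btc; auto].
  eapply btc_trans; [apply btc_sym, absorb, half; eauto; intro h; symmetry; apply H|].
  eapply btc_trans; [apply btc_C1|]. apply absorb, half; auto.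
Qed.
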